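(* Let $p(t)=\sum_{k=0}^\infty a_kt^k$ be a power series with $0\le a_k<1$ for all $k\ge0$ and $\sum_{k=0}^\infty a_k=1$. Let $p^{[1]}(t)=p(t)$, $p^{[n+1]}(t)=p(p^{[n]}(t))$, and write $p^{[n]}(t)=\sum_{k=0}^\infty a_k^{[n]}t^k$, $a^{[n]}=\sup\{a_k^{[n]}: k\ge1\}$. Then $(a_0^{[n]})_{n\in\mathbb N}$ is monotone increasing, $(a^{[n]})_{n\in\mathbb N}$ is monotone decreasing, and $\lim_{n\to\infty}a^{[n]}=0$.
   Context: Composition is composition of formal power series; since the coefficients are nonnegative and sum to $1$, each $p^{[n]}$ is well defined, has nonnegative coefficients, and $\sum_k a_k^{[n]}=1$. ''Monotone increasing/decreasing'' means non-strict monotonicity. *)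

(* Defs.v *)
From Stdlib Require Import Reals.
From Coquelicot Require Import Coquelicot.
Open Scope R_scope.

Fixpoint pow_coef (q : nat -> R) (j k : nat) : R :=
  match j with
  | O => if Nat.eqb k 0 then 1 else 0
  | S j' => sum_f_R0 (fun i => q i * pow_coef q j' (k - i)) k
  end.

(* Composition p(q(t)) = sum_j a_j q(t)^j; its coefficient of t^k is the
   series sum_j a_j [t^k] q^j (a convergent series of nonnegative terms when
   a and q have nonnegative coefficients summing to 1). *)
Definition comp_coef (a q : nat -> R) (k : nat) : R :=
  Series (fun j => a j * pow_coef q j k).

(* piter a n = coefficients of p^[n+1] : piter a 0 = p, piter a (n+1) = p o piter a n. *)
Fixpoint piter (a : nat -> R) (n : nat) : nat -> R :=
  match n with
  | O => a
  | S m => comp_coef a (piter a m)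
  end.

Definition sup_pos_coef (c : nat -> R) : Rbar :=
  Sup_seq (fun k => Finite (c (S k))).

(* Main.v *)
Require Import Defs.
From Stdlib Require Import Reals Lra Lia.
From Coquelicot Require Import Coquelicot.
Open Scope R_scope.
Module NB.
From mathcomp Require Import ssreflect ssrfun ssrbool eqtype ssrnat seq fintype bigop binomial.
From mathcomp Require Import zify.
Local Open Scope nat_scope.

Lemma central_rec l : (l.+1 * 'C(l.+1.*2, l.+1) = 2 * l.*2.+1 * 'C(l.*2, l))%N.
Proof.
have h1 := mul_bin_diag (l.+1.*2) l.
have h2 := mul_bin_diag (l.*2.+1) l.
have h3 : 'C(l.*2.+1, l) = 'C(l.*2.+1, l.+1).
  rewrite -(bin_sub (n:=l.*2.+1) (m:=l)); last by lia.
  congr ('C(_,_)); lia.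
have e1 : (l.+1.*2).-1 = l.*2.+1 by lia.
have e2 : (l.*2.+1).-1 = l.*2 by lia.
rewrite e1 in h1. rewrite e2 in h2.
lia.
Qed.

Lemma central l : (('C(l.*2, l))^2 * l.*2.+1 <= 16 ^ l)%N.
Proof.
elim: l => [|l IH]; first by [].
have h := central_rec l.
set X := 'C(l.*2, l) in h IH *. set Y := 'C(l.+1.*2, l.+1) in h *.

have : ((l.+1)^2 * (Y ^ 2 * (l.+1).*2.+1) <= (l.+1)^2 * (16 * 16 ^ l))%N.
  have -> : ((l.+1)^2 * (Y ^ 2 * (l.+1).*2.+1) = (4 * (l.*2.+1) * (l.*2.+3)) * (X^2 * l.*2.+1))%N.
    have : ((l.+1 * Y)^2 = (2 * l.*2.+1 * X)^2)%N by rewrite h.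
    nia.
  have : (4 * l.*2.+1 * l.*2.+3 <= (l.+1)^2 * 16)%N by rewrite -!muln2 expnS expn1; nia.
  nia.
move=> H; rewrite leq_pmul2l in H; last by rewrite expn_gt0. by rewrite (expnS 16 l).
Qed.

Lemma binsq l i : ('C(l, i) ^ 2 <= 'C(l.*2, l))%N.
Proof.
case: (leqP i l) => hi; last by rewrite bin_small // .
have hv := Vandermonde l l l.
rewrite addnn in hv. rewrite -hv.
have hi' : (i < l.+1)%N by [].
rewrite (bigD1 (Ordinal hi')) //= bin_sub // expnS expn1.
exact: leq_addr.
Qed.

Lemma binbound l i : ('C(l, i) ^ 4 * l.*2.+1 <= 16 ^ l)%N.
Proof.
have h1 := binsq l i. have h2 := central l.
have : ('C(l, i) ^ 4 <= 'C(l.*2, l) ^ 2)%N.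
  have -> : ('C(l, i) ^ 4 = ('C(l, i) ^ 2)^2)%N by rewrite -expnM.
  by rewrite leq_exp2r.
move=> h3. apply: leq_trans h2. by rewrite leq_mul2r h3 orbT.
Qed.

Lemma expn_pow m n : (m ^ n)%N = Nat.pow m n.
Proof. elim: n => [|n IH] //. by rewrite expnS IH. Qed.

Lemma binbound_std l i : Nat.le (Nat.mul (Nat.mul (Nat.mul (Nat.mul (binomial l i) (binomial l i)) (binomial l i)) (binomial l i)) (Nat.add (Nat.mul 2 l) 1)) (Nat.pow 16 l).
Proof.
  have h := binbound l i. rewrite -expn_pow. apply/leP.
  have e : ('C(l,i) ^ 4 = 'C(l,i) * 'C(l,i) * 'C(l,i) * 'C(l,i))%N by rewrite !expnS expn0 muln1 !mulnA.
  rewrite e in h. have e2 : (l.*2.+1 = 2 * l + 1)%N by rewrite -muln2; lia.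
  rewrite e2 in h. exact h.
Qed.

Lemma bin_S n k : binomial (S n) (S k) = (binomial n k + binomial n (S k))%coq_nat.
Proof. rewrite binS. rewrite addnC. reflexivity. Qed.
Lemma bin_0 n : binomial n 0 = 1%nat.
Proof. exact: bin0. Qed.
Lemma bin_nn n : binomial n n = 1%nat.
Proof. exact: binn. Qed.
Lemma bin_big n k : (n < k)%coq_nat -> binomial n k = 0%nat.
Proof. move/ltP => h. exact: bin_small. Qed.
End NB.

Lemma sum_rev (f : nat -> R) N : sum_f_R0 (fun i => f (N - i)%nat) N = sum_f_R0 f N.
Proof.
  revert f; induction N as [|N IH]; intros f; [reflexivity|].
  rewrite decomp_sum by lia. simpl pred.
  replace (sum_f_R0 (fun i => f (S N - S i)%nat) N) with (sum_f_R0 (fun i => f (N - i)%nat) N)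
    by (apply sum_eq; intros; f_equal; lia).
  rewrite IH. simpl. replace (S N - 0)%nat with (S N) by lia. ring.
Qed.

Lemma sum_growing a : (forall n, 0 <= a n) -> Un_growing (sum_f_R0 a).
Proof. intros H n. simpl. specialize (H (S n)). lra. Qed.

Lemma series_partial_le a l : (forall n, 0 <= a n) -> is_series a l -> forall n, sum_f_R0 a n <= l.
Proof.
  intros Ha Hs n. apply growing_ineq. apply sum_growing; auto.
  apply is_series_Reals in Hs. exact Hs.
Qed.

Lemma series_le_bound a l M : is_series a l -> (forall n, sum_f_R0 a n <= M) -> l <= M.
Proof.
  intros Hs HM.
  assert (H := is_lim_seq_le (sum_n a) (fun _ => M) l M).
  simpl in H. apply H; [|exact Hs|apply is_lim_seq_const].
  intros n; rewrite sum_n_Reals; auto.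
Qed.

Lemma series_bounded a M : (forall n, 0 <= a n) -> (forall n, sum_f_R0 a n <= M) ->
  ex_series a /\ Series a <= M.
Proof.
  intros Ha HM.
  destruct (growing_cv (sum_f_R0 a) (sum_growing a Ha)) as [l Hl].
  { exists M. intros x [n ->]. auto. }
  assert (Hs : is_series a l) by (apply is_series_Reals; exact Hl).
  split; [exists l; exact Hs|].
  rewrite (is_series_unique a l Hs). eapply series_le_bound; eauto.
Qed.

Lemma term_le_partial a n : (forall k, 0 <= a k) -> a n <= sum_f_R0 a n.
Proof.
  intros Ha. destruct n; simpl; [lra|].
  assert (0 <= sum_f_R0 a n) by (apply cond_pos_sum; auto). lra.
Qed.

Lemma term_le_series a l n : (forall k, 0 <= a k) -> is_series a l -> a n <= l.
Proof.
  intros Ha Hs. eapply Rle_trans; [apply term_le_partial; auto|].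
  apply series_partial_le; auto.
Qed.

Lemma series_nonneg a l : (forall k, 0 <= a k) -> is_series a l -> 0 <= l.
Proof. intros Ha Hs. eapply Rle_trans; [apply (Ha 0%nat)|]. eapply term_le_series; eauto. Qed.

Lemma is_series_sum (f : nat -> nat -> R) (L : nat -> R) N :
  (forall i, is_series (f i) (L i)) ->
  is_series (fun k => sum_f_R0 (fun i => f i k) N) (sum_f_R0 L N).
Proof.
  intros H. induction N as [|N IH]; simpl; [apply H|].
  apply (is_series_plus (fun k => sum_f_R0 (fun i => f i k) N) (fun k => f (S N) k)); auto.
Qed.

Lemma series_le_series a b la lb : (forall n, a n <= b n) -> is_series a la -> is_series b lb -> la <= lb.
Proof.
  intros H Ha Hb.
  assert (Hl := is_lim_seq_le (sum_n a) (sum_n b) la lb). simpl in Hl. apply Hl; auto.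
  intros n. rewrite !sum_n_Reals. apply sum_Rle. auto.
Qed.

Lemma ex_series_le_R a b : (forall n, 0 <= a n <= b n) -> ex_series b -> ex_series a.
Proof.
  intros H [lb Hb]. refine (proj1 (series_bounded a lb (fun n => proj1 (H n)) _)).
  intros n. eapply Rle_trans; [apply sum_Rle; intros; apply (proj2 (H n0))|].
  apply series_partial_le; [|exact Hb]. intros m; specialize (H m); lra.
Qed.

Lemma Series_le_R a b : (forall n, 0 <= a n <= b n) -> ex_series b -> Series a <= Series b.
Proof. intros. apply Series_le; auto. Qed.

Lemma tonelli (u : nat -> nat -> R) (U : nat -> R) (S : R) :
  (forall j k, 0 <= u j k) -> (forall j, is_series (u j) (U j)) -> is_series U S ->
  (forall k, ex_series (fun j => u j k)) /\ is_series (fun k => Series (fun j => u j k)) S.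
Proof.
  intros Hu HU HS.
  assert (HU0 : forall j, 0 <= U j) by (intros j; eapply series_nonneg; eauto).
  assert (Hex : forall k, ex_series (fun j => u j k)).
  { intros k. apply (ex_series_le_R _ U); [|exists S; exact HS].
    intros j. split; auto. eapply term_le_series; eauto. }
  split; [exact Hex|].
  set (V := fun k => Series (fun j => u j k)).
  assert (HV0 : forall k, 0 <= V k).
  { intros k. unfold V. eapply series_nonneg; [intros; apply Hu|apply Series_correct, Hex]. }
  assert (HVp : forall K, sum_f_R0 V K <= S).
  { intros K.
    assert (E := is_series_sum (fun k j => u j k) V K (fun k => Series_correct _ (Hex k))).
    eapply series_le_series; [|exact E|exact HS].
    intros j. simpl. apply series_partial_le; auto. }
  destruct (series_bounded V S HV0 HVp) as [HVe HVS].
  assert (HSV : S <= Series V).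
  { eapply series_le_bound; [exact HS|]. intros J.
    assert (E := is_series_sum u U J HU).
    eapply series_le_series; [|exact E|apply Series_correct, HVe].
    intros k. simpl. unfold V.
    apply (series_partial_le (fun j => u j k)); [auto|apply Series_correct, Hex]. }
  replace S with (Series V) by lra. apply Series_correct. exact HVe.
Qed.
Lemma is_series_scal_R (x : R) a l : is_series a l -> is_series (fun n => x * a n) (x * l).
Proof. intros H. exact (is_series_scal_l x a l H). Qed.

Lemma pow_le1 x n : 0 <= x <= 1 -> x ^ n <= 1.
Proof. intros H. rewrite <- (pow1 n). apply pow_incr. lra. Qed.

Definition GF (c : nat -> R) (t : R) := Series (fun k => c k * t ^ k).
Definition Inv (c : nat -> R) := (forall k, 0 <= c k) /\ is_series c 1.
Definition ind (m : nat) (x : R) (k : nat) : R := if Nat.eqb k m then x else 0.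

Lemma sum_ind m x n : sum_f_R0 (ind m x) n = if Nat.leb m n then x else 0.
Proof.
  induction n as [|n IH]; simpl.
  - unfold ind. destruct m; simpl; reflexivity.
  - rewrite IH. unfold ind.
    destruct (Nat.leb_spec m n); destruct (Nat.eqb_spec (S n) m); destruct (Nat.leb_spec m (S n));
    try lia; lra.
Qed.

Lemma is_series_ind m x : is_series (ind m x) x.
Proof.
  apply is_series_Reals. intros eps Heps. exists m. intros n Hn.
  rewrite sum_ind. replace (Nat.leb m n) with true by (symmetry; apply Nat.leb_le; lia).
  unfold Rdist. rewrite Rminus_diag, Rabs_R0. lra.
Qed.

Lemma pow_coef_nonneg c j k : (forall k, 0 <= c k) -> 0 <= pow_coef c j k.
Proof.
  intros Hc. revert k; induction j as [|j IH]; intros k; simpl.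
  - destruct (Nat.eqb k 0); lra.
  - apply cond_pos_sum. intros i. apply Rmult_le_pos; auto.
Qed.

Lemma pow_coef_0 c j : pow_coef c j 0 = (c 0%nat) ^ j.
Proof. induction j as [|j IH]; simpl; [reflexivity|]. rewrite IH. ring. Qed.

Lemma GF_is_series c t : Inv c -> 0 <= t <= 1 -> is_series (fun k => c k * t ^ k) (GF c t).
Proof.
  intros [Hc Hs] Ht. apply Series_correct.
  apply (ex_series_le_R _ c); [|exists 1; exact Hs].
  intros n. split. apply Rmult_le_pos; [auto|apply pow_le; lra].
  rewrite <- (Rmult_1_r (c n)) at 2. apply Rmult_le_compat_l; [auto|apply pow_le1; lra].
Qed.

Lemma GF_bounds c t : Inv c -> 0 <= t <= 1 -> 0 <= GF c t <= 1.
Proof.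
  intros Hi Ht. assert (H := GF_is_series c t Hi Ht). destruct Hi as [Hc Hs].
  split.
  - eapply series_nonneg; [|exact H]. intros; apply Rmult_le_pos; [auto|apply pow_le; lra].
  - eapply series_le_series; [|exact H|exact Hs]. intros n.
    cbv beta. rewrite <- (Rmult_1_r (c n)) at 2. apply Rmult_le_compat_l; [auto|apply pow_le1; lra].
Qed.

Lemma GF_1 c : Inv c -> GF c 1 = 1.
Proof.
  intros [Hc Hs]. unfold GF. transitivity (Series c); [|apply is_series_unique; auto]. apply Series_ext.
  intros; rewrite pow1; ring.
Qed.

Lemma GF_0 c : Inv c -> GF c 0 = c 0%nat.
Proof.
  intros Hi. assert (H := GF_is_series c 0 Hi ltac:(lra)).
  apply is_series_unique in H. rewrite <- H. unfold GF.
  apply is_series_unique. apply is_series_ext with (ind 0 (c 0%nat)); [|apply is_series_ind].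
  intros n. unfold ind. destruct n; simpl; ring.
Qed.

Lemma pow_GF c j t : Inv c -> 0 <= t <= 1 ->
  is_series (fun k => pow_coef c j k * t ^ k) ((GF c t) ^ j).
Proof.
  intros Hi Ht. induction j as [|j IH].
  - simpl. apply is_series_ext with (ind 0 1); [|apply is_series_ind].
    intros n. unfold ind. destruct n; simpl; ring.
  - simpl.
    apply is_series_ext with
      (fun k => sum_f_R0 (fun i => (c i * t ^ i) * (pow_coef c j (k - i) * t ^ (k - i))) k).
    + intros k. rewrite Rmult_comm, scal_sum. apply sum_eq. intros i Hi'.
      replace (t ^ k) with (t ^ i * t ^ (k - i)) by (rewrite <- pow_add; f_equal; lia). ring.
    + apply (is_series_mult_pos (fun i => c i * t ^ i) (fun m => pow_coef c j m * t ^ m)); [apply GF_is_series; auto|exact IH| |].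
      * intros; apply Rmult_le_pos; [apply Hi|apply pow_le; lra].
      * intros; apply Rmult_le_pos; [apply pow_coef_nonneg, Hi|apply pow_le; lra].
Qed.

Lemma pow_coef_sum c j : Inv c -> is_series (pow_coef c j) 1.
Proof.
  intros Hi. assert (H := pow_GF c j 1 Hi ltac:(lra)). rewrite GF_1, pow1 in H by auto.
  eapply is_series_ext; [|exact H]. intros; simpl; rewrite pow1; ring.
Qed.

Lemma pow_coef_le1 c j k : Inv c -> pow_coef c j k <= 1.
Proof.
  intros Hi. apply (term_le_series (pow_coef c j)); [intros; apply pow_coef_nonneg, Hi|].
  apply pow_coef_sum; auto.
Qed.

Lemma comp_GF a c t : Inv a -> Inv c -> 0 <= t <= 1 ->
  (forall k, ex_series (fun j => a j * pow_coef c j k)) /\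
  is_series (fun k => comp_coef a c k * t ^ k) (GF a (GF c t)).
Proof.
  intros Ha Hc Ht.
  assert (Hg := GF_bounds c t Hc Ht).
  destruct (tonelli (fun j k => a j * (pow_coef c j k * t ^ k)) (fun j => a j * (GF c t) ^ j)
             (GF a (GF c t))) as [H1 H2].
  - intros j k. apply Rmult_le_pos; [apply Ha|apply Rmult_le_pos; [apply pow_coef_nonneg, Hc|apply pow_le; lra]].
  - intros j. apply is_series_scal_R. apply pow_GF; auto.
  - apply GF_is_series; auto.
  - split.
    + intros k. specialize (H1 k).
      destruct (Req_dec t 0) as [Ht0|Ht0].
      * (* use t = 1 version instead *)
        destruct (tonelli (fun j k => a j * (pow_coef c j k * 1 ^ k)) (fun j => a j * (GF c 1) ^ j)
             (GF a (GF c 1))) as [H3 _].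
        { intros j k'. apply Rmult_le_pos; [apply Ha|apply Rmult_le_pos; [apply pow_coef_nonneg, Hc|apply pow_le; lra]]. }
        { intros j. apply is_series_scal_R. apply pow_GF; auto; lra. }
        { apply GF_is_series; auto. rewrite GF_1 by auto; lra. }
        eapply ex_series_ext; [|apply (H3 k)]. intros j; simpl; rewrite pow1; ring.
      * apply ex_series_scal_r with (c := / t ^ k) in H1.
        eapply ex_series_ext; [|exact H1]. intros j. simpl. field. apply pow_nonzero; auto.
    + eapply is_series_ext; [|exact H2]. intros k. simpl. unfold comp_coef.
      rewrite <- Series_scal_r. apply Series_ext. intros; ring.
Qed.

Lemma comp_Inv a c : Inv a -> Inv c -> Inv (comp_coef a c).
Proof.
  intros Ha Hc. destruct (comp_GF a c 1 Ha Hc ltac:(lra)) as [H1 H2]. split.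
  - intros k. unfold comp_coef. eapply series_nonneg; [|apply Series_correct, H1].
    intros j; apply Rmult_le_pos; [apply Ha|apply pow_coef_nonneg, Hc].
  - rewrite GF_1, GF_1 in H2 by auto. eapply is_series_ext; [|exact H2].
    intros; simpl; rewrite pow1; ring.
Qed.

Lemma ex_series_geom_R M t : 0 <= t < 1 -> ex_series (fun k => M * t ^ k).
Proof.
  intros Ht. exists (M * / (1 - t)). apply is_series_scal_R.
  apply is_series_geom. rewrite Rabs_pos_eq; lra.
Qed.

Lemma Series_geom_R M t : 0 <= t < 1 -> Series (fun k => M * t ^ k) = M / (1 - t).
Proof.
  intros Ht. rewrite Series_scal_l, Series_geom by (rewrite Rabs_pos_eq; lra). reflexivity.
Qed.

Lemma sum_zero_upto (f : nat -> R) m : (forall i, (i < m)%nat -> f i = 0) ->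
  sum_f_R0 f m = f m.
Proof.
  intros H. destruct m; [reflexivity|]. simpl.
  rewrite (sum_eq _ (fun _ => 0)); [|intros; apply H; lia].
  rewrite sum_cte. ring.
Qed.

Lemma GF_unique u v : (forall k, 0 <= u k) -> (forall k, 0 <= v k) ->
  ex_series u -> ex_series v ->
  (forall t, 0 <= t < 1 -> Series (fun k => u k * t ^ k) = Series (fun k => v k * t ^ k)) ->
  forall k, u k = v k.
Proof.
  intros Hu Hv Heu Hev HG.
  set (M := Series u + Series v).
  assert (HuM : forall k, u k <= Series u)
    by (intros; apply (term_le_series u); auto; apply Series_correct; auto).
  assert (HvM : forall k, v k <= Series v)
    by (intros; apply (term_le_series v); auto; apply Series_correct; auto).
  set (w := fun k => u k - v k).
  assert (HwM : forall k, Rabs (w k) <= M).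
  { intros k. unfold w, M. specialize (HuM k); specialize (HvM k); specialize (Hu k); specialize (Hv k).
    apply Rabs_le; lra. }
  assert (HM0 : 0 <= M) by (eapply Rle_trans; [apply Rabs_pos|apply (HwM 0%nat)]).
  assert (Hex : forall t, 0 <= t < 1 -> forall f : nat -> R, (forall k, Rabs (f k) <= M) ->
            ex_series (fun k => Rabs (f k * t ^ k)) /\ ex_series (fun k => f k * t ^ k)).
  { intros t Ht f Hf.
    assert (E : ex_series (fun k => Rabs (f k * t ^ k))).
    { apply (ex_series_le_R _ (fun k => M * t ^ k)); [|apply ex_series_geom_R; auto].
      intros k. split; [apply Rabs_pos|]. rewrite Rabs_mult, (Rabs_pos_eq (t ^ k)) by (apply pow_le; lra).
      apply Rmult_le_compat_r; [apply pow_le; lra|auto]. }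
    split; [exact E|]. apply ex_series_Rabs. exact E. }
  assert (Hw0 : forall t, 0 <= t < 1 -> Series (fun k => w k * t ^ k) = 0).
  { intros t Ht. unfold w.
    assert (E1 : ex_series (fun k => u k * t ^ k)).
    { apply (ex_series_le_R _ u); auto. intros k. split. apply Rmult_le_pos; auto; apply pow_le; lra.
      rewrite <- (Rmult_1_r (u k)) at 2. apply Rmult_le_compat_l; [auto|apply pow_le1; lra]. }
    assert (E2 : ex_series (fun k => v k * t ^ k)).
    { apply (ex_series_le_R _ v); auto. intros k. split. apply Rmult_le_pos; auto; apply pow_le; lra.
      rewrite <- (Rmult_1_r (v k)) at 2. apply Rmult_le_compat_l; [auto|apply pow_le1; lra]. }
    rewrite (Series_ext _ (fun k => u k * t ^ k - v k * t ^ k)) by (intros; ring).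
    rewrite Series_minus by auto. rewrite (HG t Ht). ring. }
  assert (Hall : forall m, (forall i, (i < m)%nat -> w i = 0) -> w m = 0).
  { intros m Hm.
    assert (Hb : forall t, 0 < t <= 1/2 -> Rabs (w m) <= 2 * M * t).
    { intros t Ht.
      assert (Ht' : 0 <= t < 1) by lra.
      destruct (Hex t Ht' w HwM) as [Ea Eb].
      assert (Hs := Series_incr_n (fun k => w k * t ^ k) (S m) ltac:(lia) Eb).
      rewrite Hw0 in Hs by auto. simpl pred in Hs.
      rewrite (sum_zero_upto (fun k => w k * t ^ k) m) in Hs
        by (intros i Hi; rewrite (Hm i Hi); ring).
      set (T := Series (fun k => w (S m + k)%nat * t ^ (S m + k))) in Hs.
      assert (HT : Rabs T <= M * t ^ (S m) / (1 - t)).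
      { assert (HBk : forall k, 0 <= Rabs (w (S m + k)%nat * t ^ (S m + k)) <= (M * t ^ S m) * t ^ k).
        { intros k. split; [apply Rabs_pos|].
          rewrite Rabs_mult, (Rabs_pos_eq (t ^ _)) by (apply pow_le; lra).
          rewrite pow_add. rewrite <- Rmult_assoc.
          apply Rmult_le_compat_r; [apply pow_le; lra|].
          apply Rmult_le_compat_r; [apply pow_le; lra|auto]. }
        unfold T. eapply Rle_trans; [apply Series_Rabs|].
        - apply (ex_series_le_R _ (fun k => (M * t ^ S m) * t ^ k)); [exact HBk|apply ex_series_geom_R; auto].
        - eapply Rle_trans.
          + apply (Series_le _ (fun k => (M * t ^ S m) * t ^ k)); [exact HBk|apply ex_series_geom_R; auto].
          + rewrite Series_geom_R by auto. right; reflexivity. }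
      assert (Hwm : w m * t ^ m = - T) by lra.
      assert (Htm : 0 < t ^ m) by (apply pow_lt; lra).
      assert (Rabs (w m) * t ^ m <= M * t ^ S m / (1 - t)).
      { rewrite <- (Rabs_pos_eq (t ^ m)) by lra. rewrite <- Rabs_mult, Hwm, Rabs_Ropp. exact HT. }
      simpl in H. 
      assert (Rabs (w m) <= M * t / (1 - t)).
      { apply (Rmult_le_reg_r (t ^ m)); auto.
        replace (M * t / (1 - t) * t ^ m) with (M * (t * t ^ m) / (1 - t)) by (field; lra). exact H. }
      eapply Rle_trans; [exact H0|].
      apply (Rmult_le_reg_r (1 - t)); [lra|].
      replace (M * t / (1 - t) * (1 - t)) with (M * t) by (field; lra).
      assert (0 <= M * t) by (apply Rmult_le_pos; lra).
      nra. }
    destruct (Req_dec (w m) 0) as [E|E]; [exact E|exfalso].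
    assert (Hp : 0 < Rabs (w m)) by (apply Rabs_pos_lt; auto).
    set (t := Rmin (1/2) (Rabs (w m) / (4 * (M + 1)))).
    assert (Ht1 : 0 < t <= 1/2).
    { unfold t. split; [apply Rmin_pos; [lra|apply Rdiv_lt_0_compat; lra]|apply Rmin_l]. }
    assert (Ht2 : t <= Rabs (w m) / (4 * (M + 1))) by apply Rmin_r.
    specialize (Hb t Ht1).
    assert (2 * M * t <= Rabs (w m) / 2).
    { apply Rle_trans with (2 * M * (Rabs (w m) / (4 * (M + 1)))).
      apply Rmult_le_compat_l; lra.
      apply (Rmult_le_reg_r (4 * (M + 1))); [lra|].
      replace (2 * M * (Rabs (w m) / (4 * (M + 1))) * (4 * (M + 1))) with (2 * M * Rabs (w m)) by (field; lra).
      replace (Rabs (w m) / 2 * (4 * (M + 1))) with (2 * M * Rabs (w m) + 2 * Rabs (w m)) by (field; lra).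
      lra. }
    lra. }
  intros k. assert (w k = 0).
  { induction k as [k IH] using (well_founded_induction Wf_nat.lt_wf). apply Hall. intros i Hi. apply IH. exact Hi. }
  unfold w in H. lra.
Qed.

Fixpoint Pit (a : nat -> R) (m : nat) (x : R) : R :=
  match m with O => x | S m' => GF a (Pit a m' x) end.

Lemma Pit_succ_r a m x : Pit a (S m) x = Pit a m (GF a x).
Proof. induction m as [|m IH]; simpl; [reflexivity|]. simpl in IH. rewrite IH. reflexivity. Qed.

Lemma Pit_bounds a m x : Inv a -> 0 <= x <= 1 -> 0 <= Pit a m x <= 1.
Proof. intros Ha Hx. induction m; simpl; auto. apply GF_bounds; auto. Qed.

Lemma GF_comp a c t : Inv a -> Inv c -> 0 <= t <= 1 -> GF (comp_coef a c) t = GF a (GF c t).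
Proof. intros Ha Hc Ht. apply is_series_unique. apply (comp_GF a c t Ha Hc Ht). Qed.

Lemma Inv_piter a n : Inv a -> Inv (piter a n).
Proof. intros Ha. induction n; simpl; auto. apply comp_Inv; auto. Qed.

Lemma GF_piter a n t : Inv a -> 0 <= t <= 1 -> GF (piter a n) t = Pit a (S n) t.
Proof.
  intros Ha Ht. induction n as [|n IH]; simpl; [reflexivity|].
  rewrite GF_comp by (auto; apply Inv_piter; auto). rewrite IH. reflexivity.
Qed.

Lemma piter_swap a n : Inv a -> forall k, piter a (S n) k = comp_coef (piter a n) a k.
Proof.
  intros Ha. assert (Hc := Inv_piter a n Ha).
  assert (H1 := comp_Inv a (piter a n) Ha Hc). assert (H2 := comp_Inv (piter a n) a Hc Ha).
  apply GF_unique.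
  - apply H1.
  - apply H2.
  - exists 1; apply H1.
  - exists 1; apply H2.
  - intros t Ht. fold (GF (piter a (S n)) t). fold (GF (comp_coef (piter a n) a) t).
    rewrite GF_piter by (auto; lra). rewrite GF_comp by (auto; lra).
    rewrite GF_piter by (auto; apply GF_bounds; auto; lra).
    rewrite Pit_succ_r. reflexivity.
Qed.

Lemma comp_coef_0 a c : comp_coef a c 0 = GF a (c 0%nat).
Proof. unfold comp_coef, GF. apply Series_ext. intros j. rewrite pow_coef_0. reflexivity. Qed.

Lemma Inv_le1 c k : Inv c -> 0 <= c k <= 1.
Proof. intros [Hc Hs]. split; auto. eapply term_le_series; eauto. Qed.

Lemma GF_mono a x y : Inv a -> 0 <= x -> x <= y -> y <= 1 -> GF a x <= GF a y.
Proof.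
  intros Ha H1 H2 H3. eapply series_le_series; [|apply GF_is_series; auto; lra|apply GF_is_series; auto; lra].
  intros n. apply Rmult_le_compat_l; [apply Ha|apply pow_incr; lra].
Qed.

Lemma GF_ge_a0 a x : Inv a -> 0 <= x <= 1 -> a 0%nat <= GF a x.
Proof.
  intros Ha Hx. assert (H := term_le_series (fun k => a k * x ^ k) (GF a x) 0).
  simpl in H. rewrite Rmult_1_r in H. apply H; [|apply GF_is_series; auto].
  intros; apply Rmult_le_pos; [apply Ha|apply pow_le; lra].
Qed.

Lemma GF_upper a x : Inv a -> 0 <= x <= 1 -> GF a x <= a 0%nat + x * (1 - a 0%nat).
Proof.
  intros Ha Hx. destruct Ha as [Ha0 Has].
  assert (E := GF_is_series a x (conj Ha0 Has) Hx).
  assert (Hb : is_series (fun k => a 0%nat * ind 0 1 k + x * (a k - a 0%nat * ind 0 1 k))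
                 (a 0%nat * 1 + x * (1 - a 0%nat * 1))).
  { apply (is_series_plus (fun k => a 0%nat * ind 0 1 k) (fun k => x * (a k - a 0%nat * ind 0 1 k))).
    - apply is_series_scal_R, is_series_ind.
    - apply is_series_scal_R. apply (is_series_minus a (fun k => a 0%nat * ind 0 1 k)); auto.
      apply is_series_scal_R, is_series_ind. }
  replace (a 0%nat + x * (1 - a 0%nat)) with (a 0%nat * 1 + x * (1 - a 0%nat * 1)) by ring.
  eapply series_le_series; [|exact E|exact Hb]. intros k. unfold ind.
  destruct k as [|k]; cbn [Nat.eqb]; [rewrite pow_O; lra|].
  change (x ^ S k) with (x * x ^ k).
  assert (x * x ^ k <= x * 1) by (apply Rmult_le_compat_l; [lra|apply pow_le1; lra]).
  specialize (Ha0 (S k)). nra.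
Qed.

Lemma x_succ a n : piter a (S n) 0%nat = GF a (piter a n 0%nat).
Proof. simpl. apply comp_coef_0. Qed.

Lemma part1 a : Inv a -> forall n, piter a n 0%nat <= piter a (S n) 0%nat.
Proof.
  intros Ha n. induction n as [|n IH].
  - rewrite x_succ. simpl. apply GF_ge_a0; auto. apply (Inv_le1 a 0 Ha).
  - rewrite (x_succ a (S n)). rewrite (x_succ a n) at 1.
    apply GF_mono; [auto|apply (Inv_le1 _ 0 (Inv_piter a n Ha))|exact IH|].
    apply (Inv_le1 _ 0 (Inv_piter a (S n) Ha)).
Qed.

Lemma x_lt1 a n : Inv a -> a 0%nat < 1 -> piter a n 0%nat < 1.
Proof.
  intros Ha Ha0. induction n as [|n IH]; simpl; auto.
  rewrite comp_coef_0. eapply Rle_lt_trans; [apply GF_upper; auto; apply (Inv_le1 _ 0 (Inv_piter a n Ha))|].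
  assert (0 <= piter a n 0%nat) by apply (Inv_le1 _ 0 (Inv_piter a n Ha)).
  nra.
Qed.

Lemma sup_info (u : nat -> R) : (forall k, 0 <= u k <= 1) ->
  exists s, Sup_seq (fun k => Finite (u k)) = Finite s /\ (forall k, u k <= s) /\ 0 <= s /\
            (forall M, (forall k, u k <= M) -> s <= M).
Proof.
  intros Hu.
  assert (Hc := Sup_seq_correct (fun k => Finite (u k))).
  apply is_sup_seq_lub in Hc. destruct Hc as [Hub Hlub].
  assert (Hle : forall M, (forall k, u k <= M) -> Rbar_le (Sup_seq (fun k => Finite (u k))) M).
  { intros M HM. apply Hlub. intros x [n ->]. simpl. apply HM. }
  assert (Hge : forall k, Rbar_le (u k) (Sup_seq (fun k => Finite (u k)))).
  { intros k. apply Hub. exists k. reflexivity. }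
  specialize (Hle 1 (fun k => proj2 (Hu k))). specialize (Hge 0%nat) as Hg0.
  destruct (Sup_seq (fun k => Finite (u k))) as [s| |] eqn:E; simpl in *; try contradiction.
  exists s. split; [reflexivity|]. split; [intros k; exact (Hge k)|].
  split; [specialize (Hu 0%nat); lra|].
  intros M HM. assert (H := Hlub M). simpl in H. apply H. intros x [n ->]. simpl. apply HM.
Qed.

Fixpoint Gs (x : R) (j : nat) : R := match j with O => 0 | S j' => x * Gs x j' + 1 end.

Lemma Gs_eq x j : (1 - x) * Gs x j = 1 - x ^ j.
Proof. induction j as [|j IH]; simpl; [ring|]. replace ((1 - x) * (x * Gs x j + 1)) with (x * ((1 - x) * Gs x j) + 1 - x) by ring. rewrite IH. ring. Qed.

Lemma Gs_bounds x j : 0 <= x < 1 -> 0 <= Gs x j <= / (1 - x).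
Proof.
  intros Hx. assert (E := Gs_eq x j).
  assert (Gs x j = (1 - x ^ j) / (1 - x)) by (rewrite <- E; field; lra).
  rewrite H. assert (0 <= x ^ j <= 1) by (split; [apply pow_le|apply pow_le1]; lra).
  assert (0 < / (1 - x)) by (apply Rinv_0_lt_compat; lra).
  unfold Rdiv. split; nra.
Qed.

Lemma pow_coef_S_bound c s : Inv c -> (forall k, c (S k) <= s) -> 0 <= s ->
  forall j k, pow_coef c j (S k) <= s * Gs (c 0%nat) j.
Proof.
  intros Hc Hs Hs0 j. induction j as [|j IH]; intros k.
  - simpl. lra.
  - cbn [pow_coef]. rewrite decomp_sum by lia. cbn [pred].
    replace (S k - 0)%nat with (S k) by lia.
    assert (H1 : sum_f_R0 (fun i => c (S i) * pow_coef c j (S k - S i)) k <= s).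
    { apply Rle_trans with (sum_f_R0 (fun i => s * pow_coef c j (k - i)) k).
      - apply sum_Rle. intros i Hi. replace (S k - S i)%nat with (k - i)%nat by lia.
        apply Rmult_le_compat_r; [apply pow_coef_nonneg, Hc|auto].
      - rewrite (sum_eq (fun i => s * pow_coef c j (k - i)) (fun i => pow_coef c j (k - i) * s))
          by (intros; ring).
        rewrite <- (scal_sum (fun i => pow_coef c j (k - i))), (sum_rev (pow_coef c j) k).
        rewrite <- (Rmult_1_r s) at 2. apply Rmult_le_compat_l; auto.
        apply series_partial_le; [intros; apply pow_coef_nonneg, Hc|apply pow_coef_sum; auto]. }
    specialize (IH k). assert (0 <= c 0%nat) by apply Hc.
    cbn [Gs]. nra.
Qed.

Lemma part2_bound a c s : Inv a -> Inv c -> c 0%nat < 1 -> c 0%nat <= GF a (c 0%nat) ->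
  (forall k, c (S k) <= s) -> 0 <= s -> forall k, comp_coef a c (S k) <= s.
Proof.
  intros Ha Hc Hx1 Hx2 Hs Hs0 k.
  set (x := c 0%nat) in *.
  assert (Hx0 : 0 <= x) by apply Hc.
  assert (Hea : ex_series a) by (exists 1; apply Ha).
  assert (HG : forall j, 0 <= Gs x j <= / (1 - x)) by (intros; apply Gs_bounds; lra).
  assert (Hinv : 0 < / (1 - x)) by (apply Rinv_0_lt_compat; lra).
  assert (HeY : ex_series (fun j => a j * Gs x j)).
  { apply (ex_series_le_R _ (fun j => / (1 - x) * a j)).
    - intros j. specialize (HG j). assert (0 <= a j) by apply Ha. split; [nra|]. nra.
    - exists (/ (1 - x) * 1). apply is_series_scal_R. apply Ha. }
  assert (HY : Series (fun j => a j * Gs x j) <= 1).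
  { assert (E : (1 - x) * Series (fun j => a j * Gs x j) = 1 - GF a x).
    { rewrite <- Series_scal_l.
      rewrite (Series_ext _ (fun j => a j - a j * x ^ j)).
      2:{ intros j. transitivity (a j * ((1 - x) * Gs x j)); [ring|rewrite Gs_eq; ring]. }
      rewrite Series_minus; [|exact Hea|].
      - rewrite (is_series_unique a 1) by apply Ha. reflexivity.
      - exists (GF a x). apply GF_is_series; auto; lra. }
    assert ((1 - x) * Series (fun j => a j * Gs x j) <= (1 - x) * 1) by lra.
    apply Rmult_le_reg_l in H; lra. }
  unfold comp_coef.
  apply Rle_trans with (Series (fun j => s * (a j * Gs x j))).
  - apply Series_le.
    + intros j. split. apply Rmult_le_pos; [apply Ha|apply pow_coef_nonneg, Hc].
      assert (H := pow_coef_S_bound c s Hc Hs Hs0 j k). fold x in H.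
      assert (0 <= a j) by apply Ha. nra.
    + destruct HeY as [l Hl]. exists (s * l). apply is_series_scal_R. exact Hl.
  - rewrite Series_scal_l. rewrite <- (Rmult_1_r s) at 2. apply Rmult_le_compat_l; auto.
Qed.

Lemma Inv_a a : (forall k, 0 <= a k < 1) -> is_series a 1 -> Inv a.
Proof. intros H1 H2. split; [intros k; apply H1|exact H2]. Qed.

Lemma C_nat n k : (k <= n)%nat -> Binomial.C n k = INR (binomial.binomial n k).
Proof.
  revert k; induction n as [|n IH]; intros k Hk.
  - assert (k = 0%nat) by lia. subst. rewrite NB.bin_0. unfold Binomial.C. simpl. field.
  - destruct k as [|k].
    + rewrite NB.bin_0. unfold Binomial.C. rewrite Nat.sub_0_r. simpl (INR (Factorial.fact 0)). change (INR 1) with 1. field.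
      apply INR_fact_neq_0.
    + destruct (Nat.eq_dec k n) as [->|Hkn].
      * rewrite NB.bin_nn. unfold Binomial.C. rewrite Nat.sub_diag. simpl (INR (Factorial.fact 0)). change (INR 1) with 1. field.
        apply INR_fact_neq_0.
      * rewrite <- pascal by lia. rewrite NB.bin_S, plus_INR. rewrite IH, IH by lia. reflexivity.
Qed.

Lemma C_nonneg n k : 0 <= Binomial.C n k.
Proof.
  unfold Binomial.C. apply Rle_mult_inv_pos; [apply pos_INR|].
  apply Rmult_lt_0_compat; apply INR_fact_lt_0.
Qed.

Lemma binom_bound4 l i : (i <= l)%nat -> (Binomial.C l i * (/ 2) ^ l) ^ 4 <= / (INR (2 * l + 1)).
Proof.
  intros Hi. rewrite C_nat by auto.
  assert (H := NB.binbound_std l i). apply le_INR in H.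
  rewrite !mult_INR, pow_INR in H. simpl (INR 16) in H.
  set (b := INR (binomial.binomial l i)) in *.
  assert (Hp : 0 < INR (2 * l + 1)) by (apply lt_0_INR; lia).
  assert (E16 : (2 * (2 * (2 * (2 * 1)))) ^ l * ((/ 2) ^ l) ^ 4 = 1).
  { rewrite <- pow_mult, Nat.mul_comm, pow_mult, <- Rpow_mult_distr. replace (2 * (2 * (2 * (2 * 1))) * (/ 2) ^ 4) with 1 by (simpl; field).
    apply pow1. }
  replace ((b * (/ 2) ^ l) ^ 4) with (b * b * b * b * ((/ 2) ^ l) ^ 4) by ring.
  apply (Rmult_le_reg_r (INR (2 * l + 1))); auto.
  rewrite Rinv_l by lra.
  replace (b * b * b * b * ((/ 2) ^ l) ^ 4 * INR (2 * l + 1)) with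
    (b * b * b * b * INR (2 * l + 1) * ((/ 2) ^ l) ^ 4) by ring.
  rewrite <- E16. apply Rmult_le_compat_r; [apply pow_le, pow_le; lra|].
  replace (2 * (2 * (2 * (2 * 1)))) with (1 + 1 + 1 + 1 + 1 + 1 + 1 + 1 + 1 + 1 + 1 + 1 + 1 + 1 + 1 + 1) by ring.
  exact H.
Qed.

Lemma is_series_ext_R (a b : nat -> R) (l : R) : (forall n, a n = b n) -> is_series a l -> is_series b l.
Proof. apply is_series_ext. Qed.

Definition conv (f g : nat -> R) (k : nat) : R := sum_f_R0 (fun i => f i * g (k - i)%nat) k.

Lemma conv_nonneg f g k : (forall k, 0 <= f k) -> (forall k, 0 <= g k) -> 0 <= conv f g k.
Proof. intros. apply cond_pos_sum. intros; apply Rmult_le_pos; auto. Qed.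

Lemma conv_GF f g F G t : (forall k, 0 <= f k) -> (forall k, 0 <= g k) -> 0 <= t ->
  is_series (fun k => f k * t ^ k) F -> is_series (fun k => g k * t ^ k) G ->
  is_series (fun k => conv f g k * t ^ k) (F * G).
Proof.
  intros Hf Hg Ht HF HG.
  apply is_series_ext_R with
    (fun k => sum_f_R0 (fun i => (f i * t ^ i) * (g (k - i)%nat * t ^ (k - i))) k).
  - intros k. cbv beta. unfold conv. rewrite (Rmult_comm (sum_f_R0 _ _)), scal_sum. apply sum_eq. intros i Hi'.
    replace (t ^ k) with (t ^ i * t ^ (k - i)) by (rewrite <- pow_add; f_equal; lia). ring.
  - apply (is_series_mult_pos (fun i => f i * t ^ i) (fun m => g m * t ^ m)); auto.
    + intros; apply Rmult_le_pos; [auto|apply pow_le; lra].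
    + intros; apply Rmult_le_pos; [auto|apply pow_le; lra].
Qed.

Lemma conv_bound f g H k : (forall k, 0 <= f k) -> (forall k, 0 <= g k <= H) ->
  conv f g k <= H * sum_f_R0 f k.
Proof.
  intros Hf Hg. unfold conv. rewrite scal_sum. apply sum_Rle. intros i Hi.
  specialize (Hf i). specialize (Hg (k - i)%nat). nra.
Qed.

Lemma ind_GF m x t : is_series (fun k => ind m x k * t ^ k) (x * t ^ m).
Proof.
  apply is_series_ext_R with (ind m (x * t ^ m)); [|apply is_series_ind].
  intros k. unfold ind. destruct (Nat.eqb_spec k m) as [E|E]; cbv iota; [rewrite E; ring|ring].
Qed.

Lemma ind_nonneg m x k : 0 <= x -> 0 <= ind m x k.
Proof. intros. unfold ind. destruct (Nat.eqb k m); lra. Qed.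

Definition Gl (d l m : nat) : R := sum_f_R0 (fun i => Binomial.C l i * (/ 2) ^ l * ind (i * d) 1 m) l.

Lemma Gl_nonneg d l m : 0 <= Gl d l m.
Proof.
  apply cond_pos_sum. intros i. apply Rmult_le_pos; [apply Rmult_le_pos; [apply C_nonneg|apply pow_le; lra]|apply ind_nonneg; lra].
Qed.

Lemma Gl_GF d l t : is_series (fun m => Gl d l m * t ^ m) ((/ 2 * t ^ d + / 2) ^ l).
Proof.
  apply is_series_ext_R with
    (fun m => sum_f_R0 (fun i => Binomial.C l i * (/ 2) ^ l * (ind (i * d) 1 m * t ^ m)) l).
  - intros m. unfold Gl. rewrite (Rmult_comm (sum_f_R0 _ _)), scal_sum. apply sum_eq; intros; ring.
  - replace ((/ 2 * t ^ d + / 2) ^ l) with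
      (sum_f_R0 (fun i => Binomial.C l i * (/ 2) ^ l * (1 * t ^ (i * d))) l).
    + apply (is_series_sum (fun i m => Binomial.C l i * (/ 2) ^ l * (ind (i * d) 1 m * t ^ m))).
      intros i. apply is_series_scal_R. apply ind_GF.
    + rewrite binomial. apply sum_eq. intros i Hi.
      rewrite Rpow_mult_distr, <- pow_mult.
      replace ((/ 2) ^ l) with ((/ 2) ^ i * (/ 2) ^ (l - i)) by (rewrite <- pow_add; f_equal; lia).
      replace (d * i)%nat with (i * d)%nat by lia. ring.
Qed.

Lemma ind_sum_le1 (w : nat -> R) d l m H : (1 <= d)%nat -> 0 <= H -> (forall i, 0 <= w i) ->
  (forall i, (i <= l)%nat -> w i <= H) ->
  sum_f_R0 (fun i => w i * ind (i * d) 1 m) l <= H.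
Proof.
  intros Hd HH Hw Hb. induction l as [|l IH].
  - simpl. unfold ind. destruct (Nat.eqb _ _); [rewrite Rmult_1_r; apply Hb; lia|rewrite Rmult_0_r; lra].
  - simpl. unfold ind at 2. destruct (Nat.eqb_spec m (d + l * d)) as [E|E]; cbv iota.
    + rewrite (sum_eq _ (fun _ => 0)).
      * rewrite sum_cte, Rmult_0_l, Rplus_0_l, Rmult_1_r. apply Hb; lia.
      * intros i Hi. unfold ind. destruct (Nat.eqb_spec m (i * d)); [|ring].
        exfalso. subst m. nia.
    + rewrite Rmult_0_r, Rplus_0_r. apply IH. intros; apply Hb; lia.
Qed.

Lemma is_series_eq_lim (a : nat -> R) (l l' : R) : l = l' -> is_series a l -> is_series a l'.
Proof. intros ->; auto. Qed.

Definition beta2 (u v : nat) (k : nat) : R := ind u (/ 2) k + ind v (/ 2) k.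
Definition nu (a : nat -> R) (al : R) (u v : nat) (k : nat) : R := (a k - al * beta2 u v k) / (1 - al).
Definition rho (nv : nat -> R) (u j l : nat) (k : nat) : R := conv (ind (u * l) 1) (pow_coef nv (j - l)) k.
Definition Mx (nv : nat -> R) (al : R) (u d j : nat) (k : nat) : R :=
  sum_f_R0 (fun l => Binomial.C j l * al ^ l * (1 - al) ^ (j - l) * conv (rho nv u j l) (Gl d l) k) j.

Lemma beta2_GF u v t : is_series (fun k => beta2 u v k * t ^ k) (/ 2 * t ^ u + / 2 * t ^ v).
Proof.
  apply is_series_ext_R with (fun k => ind u (/ 2) k * t ^ k + ind v (/ 2) k * t ^ k).
  - intros k. unfold beta2. ring.
  - apply (is_series_plus (fun k => ind u (/ 2) k * t ^ k) (fun k => ind v (/ 2) k * t ^ k)); apply ind_GF.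
Qed.

Lemma nu_props a u v : Inv a -> (u < v)%nat -> 0 < a u -> 0 < a v -> a u < 1 ->
  let al := Rmin (a u) (a v) in
  0 < al < 1 /\ Inv (nu a al u v) /\ (forall k, a k = al * beta2 u v k + (1 - al) * nu a al u v k).
Proof.
  intros Ha Huv Hu Hv Hu1 al.
  assert (Hal : 0 < al < 1).
  { unfold al. split; [apply Rmin_pos; auto|]. eapply Rle_lt_trans; [apply Rmin_l|auto]. }
  assert (Hal1 : al <= a u) by apply Rmin_l. assert (Hal2 : al <= a v) by apply Rmin_r.
  split; [exact Hal|]. split; [split|].
  - intros k. unfold nu. apply Rdiv_le_0_compat; [|lra].
    unfold beta2, ind. destruct (Nat.eqb_spec k u); destruct (Nat.eqb_spec k v); try lia; subst.
    + lra.
    + lra.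
    + assert (0 <= a k) by apply Ha. lra.
  - apply is_series_ext_R with (fun k => / (1 - al) * (a k + - al * beta2 u v k)).
    + intros k. unfold nu. field. lra.
    + apply (is_series_eq_lim _ (/ (1 - al) * (1 + - al * (/ 2 * 1 ^ u + / 2 * 1 ^ v))));
        [rewrite !pow1; field; lra|].
      apply is_series_scal_R.
      apply (is_series_plus a (fun k => - al * beta2 u v k)); [apply Ha|].
      apply is_series_scal_R. eapply is_series_ext_R; [|apply (beta2_GF u v 1)].
      intros; simpl; rewrite pow1; ring.
  - intros k. unfold nu. field. lra.
Qed.

Lemma Mx_GF nv al u d j t : Inv nv -> 0 <= al <= 1 -> 0 <= t <= 1 ->
  is_series (fun k => Mx nv al u d j k * t ^ k)
    (sum_f_R0 (fun l => Binomial.C j l * al ^ l * (1 - al) ^ (j - l) *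
        ((1 * t ^ (u * l) * (GF nv t) ^ (j - l)) * (/ 2 * t ^ d + / 2) ^ l)) j).
Proof.
  intros Hn Hal Ht.
  apply is_series_ext_R with (fun k => sum_f_R0 (fun l => Binomial.C j l * al ^ l * (1 - al) ^ (j - l) *
     (conv (rho nv u j l) (Gl d l) k * t ^ k)) j).
  - intros k. unfold Mx. rewrite (Rmult_comm (sum_f_R0 _ _)), scal_sum. apply sum_eq; intros; ring.
  - apply (is_series_sum (fun l k => Binomial.C j l * al ^ l * (1 - al) ^ (j - l) *
     (conv (rho nv u j l) (Gl d l) k * t ^ k))).
    intros l. apply is_series_scal_R.
    apply conv_GF; [intros; unfold rho; apply conv_nonneg; [intros; apply ind_nonneg; lra|intros; apply pow_coef_nonneg, Hn]
                   |intros; apply Gl_nonneg|lra| |apply Gl_GF].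
    unfold rho. apply conv_GF; [intros; apply ind_nonneg; lra|intros; apply pow_coef_nonneg, Hn|lra|apply ind_GF|].
    apply pow_GF; auto.
Qed.

Lemma Mx_nonneg nv al u d j k : Inv nv -> 0 <= al <= 1 -> 0 <= Mx nv al u d j k.
Proof.
  intros Hn Hal. unfold Mx. apply cond_pos_sum. intros l.
  apply Rmult_le_pos; [apply Rmult_le_pos; [apply Rmult_le_pos; [apply C_nonneg|apply pow_le; lra]|apply pow_le; lra]|].
  apply conv_nonneg; [intros; unfold rho; apply conv_nonneg; [intros; apply ind_nonneg; lra|intros; apply pow_coef_nonneg, Hn]|intros; apply Gl_nonneg].
Qed.

Lemma pow_a_Mx a u v : Inv a -> (u < v)%nat -> 0 < a u -> 0 < a v -> a u < 1 ->
  let al := Rmin (a u) (a v) in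
  forall j k, pow_coef a j k = Mx (nu a al u v) al u (v - u) j k.
Proof.
  intros Ha Huv Hu Hv Hu1 al.
  destruct (nu_props a u v Ha Huv Hu Hv Hu1) as [Hal [Hn Hdec]]. fold al in Hal, Hn, Hdec.
  set (nv := nu a al u v) in *. set (d := (v - u)%nat).
  intros j. apply GF_unique.
  - intros; apply pow_coef_nonneg, Ha.
  - intros; apply Mx_nonneg; auto; lra.
  - exists 1. apply pow_coef_sum; auto.
  - eexists. eapply is_series_ext_R; [|apply (Mx_GF nv al u d j 1 Hn ltac:(lra) ltac:(lra))].
    intros; simpl; rewrite pow1; ring.
  - intros t Ht.
    rewrite (is_series_unique _ _ (pow_GF a j t Ha ltac:(lra))).
    rewrite (is_series_unique _ _ (Mx_GF nv al u d j t Hn ltac:(lra) ltac:(lra))).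
    assert (HGa : GF a t = al * (t ^ u * (/ 2 * t ^ d + / 2)) + (1 - al) * GF nv t).
    { apply is_series_unique.
      apply (is_series_eq_lim _ (al * (/ 2 * t ^ u + / 2 * t ^ v) + (1 - al) * GF nv t)).
      { replace v with (u + d)%nat by (unfold d; lia). rewrite pow_add. ring. }
      eapply is_series_ext_R.
      2:{ apply (is_series_plus (fun k => al * (beta2 u v k * t ^ k)) (fun k => (1 - al) * (nv k * t ^ k))).
          - apply is_series_scal_R, beta2_GF.
          - apply is_series_scal_R, GF_is_series; auto; lra. }
      intros k. change (plus (al * (beta2 u v k * t ^ k)) ((1 - al) * (nv k * t ^ k)) = a k * t ^ k). unfold plus; simpl. rewrite (Hdec k). fold nv. ring. }
    rewrite HGa.
    rewrite binomial. apply sum_eq. intros l Hl.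
    rewrite !Rpow_mult_distr. rewrite <- pow_mult. ring.
Qed.

Lemma rho_sum_le1 nv u j l k : Inv nv -> sum_f_R0 (rho nv u j l) k <= 1.
Proof.
  intros Hn. apply series_partial_le.
  - intros; unfold rho; apply conv_nonneg; [intros; apply ind_nonneg; lra|intros; apply pow_coef_nonneg, Hn].
  - apply (is_series_eq_lim _ (1 * 1 ^ (u * l) * (GF nv 1) ^ (j - l))); [rewrite GF_1, !pow1 by auto; ring|].
    apply is_series_ext_R with (fun k => conv (ind (u * l) 1) (pow_coef nv (j - l)) k * 1 ^ k);
      [|apply conv_GF; [intros; apply ind_nonneg; lra|intros; apply pow_coef_nonneg, Hn|lra|apply ind_GF|apply pow_GF; auto; lra]].
    intros k'. rewrite pow1. unfold rho. ring.
Qed.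

Lemma Mx_bound nv al u d j k (H : nat -> R) : Inv nv -> 0 <= al <= 1 -> (1 <= d)%nat ->
  (forall l, 0 <= H l) -> (forall l i, (i <= l)%nat -> Binomial.C l i * (/ 2) ^ l <= H l) ->
  Mx nv al u d j k <= sum_f_R0 (fun l => Binomial.C j l * al ^ l * (1 - al) ^ (j - l) * H l) j.
Proof.
  intros Hn Hal Hd HH Hb. unfold Mx. apply sum_Rle. intros l Hl.
  apply Rmult_le_compat_l.
  - apply Rmult_le_pos; [apply Rmult_le_pos; [apply C_nonneg|apply pow_le; lra]|apply pow_le; lra].
  - eapply Rle_trans; [apply (conv_bound _ _ (H l))|].
    + intros; unfold rho; apply conv_nonneg; [intros; apply ind_nonneg; lra|intros; apply pow_coef_nonneg, Hn].
    + intros m. split; [apply Gl_nonneg|]. unfold Gl.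
      apply (ind_sum_le1 (fun i => Binomial.C l i * (/ 2) ^ l)); auto.
      intros; apply Rmult_le_pos; [apply C_nonneg|apply pow_le; lra].
    + rewrite <- (Rmult_1_r (H l)) at 2. apply Rmult_le_compat_l; auto. apply rho_sum_le1; auto.
Qed.

Lemma two_atoms a : Inv a -> (forall k, a k < 1) -> exists u v, (u < v)%nat /\ 0 < a u /\ 0 < a v.
Proof.
  intros [Ha Hs] Ha1.
  destruct (Classical_Prop.classic (exists u, 0 < a u)) as [[u Hu]|Hno].
  2:{ exfalso. assert (1 <= 0); [|lra].
      eapply series_le_bound; [exact Hs|]. intros n.
      rewrite (sum_eq _ (fun _ => 0)); [rewrite sum_cte; lra|].
      intros i _. specialize (Ha i). destruct (Rle_lt_or_eq_dec _ _ Ha) as [E|E]; [|auto].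
      exfalso. apply Hno. exists i. exact E. }
  destruct (Classical_Prop.classic (exists v, v <> u /\ 0 < a v)) as [[v [Hvu Hv]]|Hno].
  2:{ exfalso.
      assert (E : is_series a (a u)).
      { apply is_series_ext_R with (ind u (a u)); [|apply is_series_ind].
        intros k. unfold ind. destruct (Nat.eqb_spec k u) as [->|Hk]; [reflexivity|].
        specialize (Ha k). destruct (Rle_lt_or_eq_dec _ _ Ha) as [E|E]; [|auto].
        exfalso. apply Hno. exists k. auto. }
      assert (a u = 1) by (rewrite <- (is_series_unique a (a u) E); apply is_series_unique; auto).
      specialize (Ha1 u). lra. }
  destruct (Nat.lt_ge_cases u v).
  - exists u, v. auto.
  - exists v, u. split; [lia|auto].
Qed.

Lemma anticonc a : Inv a -> (forall k, a k < 1) ->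
  forall eps, 0 < eps -> exists J, forall j, (J <= j)%nat -> forall k, pow_coef a j k <= eps.
Proof.
  intros Ha Ha1 eps Heps.
  destruct (two_atoms a Ha Ha1) as [u [v [Huv [Hu Hv]]]].
  assert (Hpa := pow_a_Mx a u v Ha Huv Hu Hv (Ha1 u)). cbv zeta in Hpa.
  destruct (nu_props a u v Ha Huv Hu Hv (Ha1 u)) as [Hal [Hn _]]. cbv zeta in Hal, Hn.
  set (al := Rmin (a u) (a v)) in *. set (nv := nu a al u v) in *.
  set (e2 := eps / 2).
  assert (He2 : 0 < e2) by (unfold e2; lra).
  destruct (INR_archimed 1 (/ (e2 ^ 4)) ltac:(lra)) as [L HL]. rewrite Rmult_1_r in HL.
  set (Hf := fun l => if Nat.leb L l then e2 else 1).
  assert (HH0 : forall l, 0 <= Hf l) by (intros; unfold Hf; destruct (Nat.leb L l); lra).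
  assert (Hb : forall l i, (i <= l)%nat -> Binomial.C l i * (/ 2) ^ l <= Hf l).
  { intros l i Hi. assert (B := binom_bound4 l i Hi).
    set (x := Binomial.C l i * (/ 2) ^ l) in *.
    assert (Hx0 : 0 <= x) by (unfold x; apply Rmult_le_pos; [apply C_nonneg|apply pow_le; lra]).
    assert (Hpos : 0 < INR (2 * l + 1)) by (apply lt_0_INR; lia).
    assert (Hinv1 : / INR (2 * l + 1) <= 1).
    { rewrite <- Rinv_1. apply Rinv_le_contravar; [lra|]. rewrite plus_INR. simpl (INR 1).
      assert (0 <= INR (2 * l)) by apply pos_INR. lra. }
    unfold Hf. destruct (Nat.leb_spec L l) as [HLl|HLl].
    - destruct (Rle_or_lt x e2) as [Hxe|Hxe]; [exact Hxe|exfalso].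
      assert (e2 ^ 4 <= x ^ 4) by (apply pow_incr; lra).
      assert (/ INR (2 * l + 1) < e2 ^ 4).
      { assert (0 < e2 ^ 4) by (apply pow_lt; lra).
        assert (INR L <= INR (2 * l + 1)) by (apply le_INR; lia).
        apply (Rmult_lt_reg_l (INR (2 * l + 1))); [lra|]. rewrite Rinv_r by lra.
        assert (/ e2 ^ 4 < INR (2 * l + 1)) by lra.
        apply (Rmult_lt_reg_l (/ e2 ^ 4)); [apply Rinv_0_lt_compat; lra|].
        rewrite Rmult_1_r. replace (/ e2 ^ 4 * (INR (2 * l + 1) * e2 ^ 4)) with (INR (2 * l + 1)) by (field; lra).
        lra. }
      lra.
    - destruct (Rle_or_lt x 1) as [Hxe|Hxe]; [exact Hxe|exfalso].
      assert (1 < x ^ 4) by (apply Rlt_pow_R1; [lra|lia]). lra. }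
  assert (Hd : (1 <= v - u)%nat) by lia.
  assert (Hsum : forall j k, pow_coef a j k <= e2 + 2 ^ L * (1 - al / 2) ^ j).
  { intros j k. rewrite Hpa.
    eapply Rle_trans; [apply (Mx_bound nv al u (v - u) j k Hf Hn ltac:(lra) Hd HH0 Hb)|].
    assert (HHb : forall l, Hf l <= e2 + 2 ^ L * (/ 2) ^ l).
    { intros l. unfold Hf. assert (0 <= 2 ^ L * (/ 2) ^ l) by (apply Rmult_le_pos; apply pow_le; lra).
      destruct (Nat.leb_spec L l); [lra|].
      replace (2 ^ L) with (2 ^ l * 2 ^ (L - l)) by (rewrite <- pow_add; f_equal; lia).
      replace (2 ^ l * 2 ^ (L - l) * (/ 2) ^ l) with ((2 * / 2) ^ l * 2 ^ (L - l))
        by (rewrite Rpow_mult_distr; ring).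
      rewrite Rinv_r, pow1 by lra. assert (1 <= 2 ^ (L - l)) by (apply pow_R1_Rle; lra). lra. }
    eapply Rle_trans.
    { apply sum_Rle. intros l Hl. apply Rmult_le_compat_l; [|apply HHb].
      apply Rmult_le_pos; [apply Rmult_le_pos; [apply C_nonneg|apply pow_le; lra]|apply pow_le; lra]. }
    right.
    assert (E12 : 1 - al / 2 = al * / 2 + (1 - al)) by field. rewrite E12.
    rewrite binomial.
    replace e2 with (e2 * (al + (1 - al)) ^ j) at 1 by (replace (al + (1 - al)) with 1 by ring; rewrite pow1; ring).
    rewrite binomial. rewrite !scal_sum. rewrite <- sum_plus. apply sum_eq. intros l Hl.
    rewrite Rpow_mult_distr. ring. }
  assert (Hq : Rabs (1 - al / 2) < 1) by (rewrite Rabs_pos_eq; lra).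
  assert (H2L : 0 < 2 ^ L) by (apply pow_lt; lra).
  destruct (pow_lt_1_zero (1 - al / 2) Hq (e2 / 2 ^ L) ltac:(apply Rdiv_lt_0_compat; lra)) as [J HJ].
  exists J. intros j Hj k. specialize (HJ j Hj). rewrite Rabs_pos_eq in HJ by (apply pow_le; lra).
  eapply Rle_trans; [apply Hsum|].
  assert (2 ^ L * (1 - al / 2) ^ j <= e2).
  { apply (Rmult_le_reg_l (/ 2 ^ L)); [apply Rinv_0_lt_compat; lra|].
    replace (/ 2 ^ L * (2 ^ L * (1 - al / 2) ^ j)) with ((1 - al / 2) ^ j) by (field; lra).
    unfold Rdiv in HJ. rewrite Rmult_comm. lra. }
  unfold e2 in *. lra.
Qed.

Lemma pow_decr t i j : 0 <= t <= 1 -> (i <= j)%nat -> t ^ j <= t ^ i.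
Proof.
  intros Ht Hij. replace j with (i + (j - i))%nat by lia. rewrite pow_add.
  rewrite <- (Rmult_1_r (t ^ i)) at 2. apply Rmult_le_compat_l; [apply pow_le; lra|apply pow_le1; lra].
Qed.

Lemma step_bound a n eps J t : Inv a -> 0 < t <= 1 -> 0 <= eps ->
  (forall j, (J <= j)%nat -> forall k, pow_coef a j k <= eps) ->
  forall k, piter a (S n) (S k) <= eps + / t ^ J * (GF (piter a n) t - piter a n 0%nat).
Proof.
  intros Ha Ht Heps HJ k.
  set (c := piter a n). assert (Hc : Inv c) by apply Inv_piter, Ha.
  rewrite piter_swap by auto. fold c. unfold comp_coef.
  assert (HtJ : 0 < t ^ J) by (apply pow_lt; lra).
  set (w := fun j => eps * c j + / t ^ J * (c j * t ^ j - ind 0 (c 0%nat) j)).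
  assert (Hw : is_series w (eps * 1 + / t ^ J * (GF c t - c 0%nat))).
  { apply (is_series_plus (fun j => eps * c j) (fun j => / t ^ J * (c j * t ^ j - ind 0 (c 0%nat) j))).
    - apply is_series_scal_R, Hc.
    - apply is_series_scal_R.
      apply (is_series_minus (fun j => c j * t ^ j) (ind 0 (c 0%nat))).
      + apply GF_is_series; auto; lra.
      + apply is_series_ind. }
  replace (eps + / t ^ J * (GF c t - c 0%nat)) with (Series w) by (rewrite (is_series_unique _ _ Hw); ring).
  apply Series_le; [|exists (eps * 1 + / t ^ J * (GF c t - c 0%nat)); exact Hw].
  intros j. assert (Hcj : 0 <= c j) by apply Hc.
  assert (Hp : 0 <= pow_coef a j (S k)) by (apply pow_coef_nonneg, Ha).
  assert (Hp1 : pow_coef a j (S k) <= 1) by (apply pow_coef_le1; auto).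
  split; [apply Rmult_le_pos; auto|]. unfold w, ind.
  destruct j as [|j].
  - simpl. rewrite Rmult_0_r. rewrite Rmult_1_r. replace (c 0%nat - c 0%nat) with 0 by ring. nra.
  - cbn [Nat.eqb]. rewrite Rminus_0_r.
    assert (Hq : 0 <= / t ^ J * (c (S j) * t ^ S j)).
    { apply Rmult_le_pos; [left; apply Rinv_0_lt_compat; auto|apply Rmult_le_pos; [auto|apply pow_le; lra]]. }
    destruct (Nat.le_gt_cases J (S j)) as [HJj|HJj].
    + specialize (HJ (S j) HJj (S k)). nra.
    + assert (t ^ J <= t ^ S j) by (apply pow_decr; lra || lia).
      assert (c (S j) <= / t ^ J * (c (S j) * t ^ S j)).
      { apply (Rmult_le_reg_l (t ^ J)); auto.
        replace (t ^ J * (/ t ^ J * (c (S j) * t ^ S j))) with (c (S j) * t ^ S j) by (field; lra).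
        rewrite Rmult_comm. apply Rmult_le_compat_l; auto. }
      nra.
Qed.

Lemma Pit_small a : Inv a -> a 0%nat = 0 -> a 1%nat < 1 ->
  forall m, Pit a m (/ 2) <= / 2 * ((1 + a 1%nat) / 2) ^ m.
Proof.
  intros Ha Ha0 Ha1.
  set (r := (1 + a 1%nat) / 2).
  assert (Hstep : forall x, 0 <= x <= / 2 -> GF a x <= r * x).
  { intros x Hx.
    set (b := fun j => a j * x ^ 2 + ind 1 (a 1%nat * (x - x ^ 2)) j).
    assert (Hb : is_series b (1 * x ^ 2 + a 1%nat * (x - x ^ 2))).
    { apply (is_series_plus (fun j => a j * x ^ 2) (ind 1 (a 1%nat * (x - x ^ 2)))).
      - apply (is_series_eq_lim _ (x ^ 2 * 1)); [ring|].
        eapply is_series_ext_R; [|apply (is_series_scal_R (x ^ 2) a 1 (proj2 Ha))]. intros; simpl; ring.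
      - apply is_series_ind. }
    assert (HG : GF a x <= 1 * x ^ 2 + a 1%nat * (x - x ^ 2)).
    { eapply series_le_series; [|apply GF_is_series; auto; lra|exact Hb].
      intros j. unfold b, ind. assert (0 <= a j) by apply Ha.
      destruct j as [|[|j]]; cbn [Nat.eqb].
      - rewrite Ha0. simpl. lra.
      - simpl. lra.
      - assert (x ^ S (S j) <= x ^ 2) by (apply pow_decr; lra || lia). nra. }
    assert (0 <= a 1%nat) by apply Ha.
    assert (0 <= (1 - a 1%nat) * (x * (/ 2 - x))) by (apply Rmult_le_pos; [|apply Rmult_le_pos]; lra).
    unfold r. simpl in HG. unfold Rdiv. nra. }
  assert (Hr : 0 <= r < 1) by (unfold r; assert (0 <= a 1%nat) by apply Ha; split; lra).
  induction m as [|m IH]; simpl; [lra|].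
  assert (Hpm : 0 <= Pit a m (/ 2)) by (apply Pit_bounds; auto; lra).
  assert (r ^ m <= 1) by (apply pow_le1; lra).
  eapply Rle_trans; [apply Hstep; split; [auto|nra]|]. fold r in IH. nra.
Qed.

Lemma exists_small a : Inv a -> (forall k, a k < 1) ->
  forall eps, 0 < eps -> exists n, real (sup_pos_coef (piter a (S n))) <= eps.
Proof.
  intros Ha Ha1 eps Heps.
  destruct (anticonc a Ha Ha1 (eps / 2) ltac:(lra)) as [J HJ].
  assert (Hsup : forall n M, (forall k, piter a (S n) (S k) <= M) -> real (sup_pos_coef (piter a (S n))) <= M).
  { intros n M HM. destruct (sup_info (fun k => piter a (S n) (S k))) as [s [Es [_ [_ Hs]]]].
    - intros k. apply Inv_le1, Inv_piter, Ha.
    - unfold sup_pos_coef. rewrite Es. simpl. apply Hs. exact HM. }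
  assert (Key : forall t, 0 < t <= 1 -> (exists n, GF (piter a n) t - piter a n 0%nat <= t ^ J * (eps / 2)) ->
            exists n, real (sup_pos_coef (piter a (S n))) <= eps).
  { intros t Ht [n Hn]. exists n. apply Hsup. intros k.
    eapply Rle_trans; [apply (step_bound a n (eps / 2) J t Ha Ht ltac:(lra) HJ)|].
    assert (HtJ : 0 < t ^ J) by (apply pow_lt; lra).
    assert (/ t ^ J * (GF (piter a n) t - piter a n 0%nat) <= eps / 2).
    { apply (Rmult_le_reg_l (t ^ J)); auto.
      replace (t ^ J * (/ t ^ J * (GF (piter a n) t - piter a n 0%nat))) with (GF (piter a n) t - piter a n 0%nat) by (field; lra).
      exact Hn. }
    lra. }
  assert (Ha0 := proj1 Ha 0%nat).
  destruct (Rle_lt_or_eq_dec _ _ Ha0) as [Hpos|Hz].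
  -
    apply (Key (a 0%nat)); [split; [auto|left; apply Ha1]|].
    set (eta := a 0%nat ^ J * (eps / 2)).
    assert (Heta : 0 < eta) by (unfold eta; apply Rmult_lt_0_compat; [apply pow_lt; auto|lra]).
    assert (Hdiff : forall n, GF (piter a n) (a 0%nat) - piter a n 0%nat = piter a (S n) 0%nat - piter a n 0%nat).
    { intros n. f_equal.
      rewrite GF_piter by first [exact Ha | split; [lra|left; apply Ha1]].
      rewrite <- (GF_0 a Ha). rewrite <- Pit_succ_r.
      rewrite <- (GF_piter a (S n) 0 Ha ltac:(lra)). apply GF_0. apply Inv_piter, Ha. }
    destruct (Classical_Prop.classic (exists n, piter a (S n) 0%nat - piter a n 0%nat <= eta)) as [[n Hn]|Hno].
    + exists n. rewrite Hdiff. exact Hn.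
    + exfalso.
      assert (Hall : forall n, piter a n 0%nat >= piter a 0 0%nat + INR n * eta).
      { induction n as [|n IH]. simpl. lra.
        assert (piter a (S n) 0%nat - piter a n 0%nat > eta).
        { apply Rnot_le_gt. intros C. apply Hno. exists n. exact C. }
        rewrite S_INR. lra. }
      destruct (INR_archimed eta 1 Heta) as [N HN].
      specialize (Hall N).
      assert (piter a N 0%nat <= 1) by apply (Inv_le1 _ 0 (Inv_piter a N Ha)).
      assert (0 <= piter a 0 0%nat) by apply (Inv_le1 _ 0 (Inv_piter a 0 Ha)).
      lra.
  -
    apply (Key (/ 2)); [lra|].
    set (r := (1 + a 1%nat) / 2).
    assert (Hr : Rabs r < 1) by (unfold r; assert (0 <= a 1%nat) by apply Ha; specialize (Ha1 1%nat); rewrite Rabs_pos_eq; lra).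
    assert (Heta : 0 < (/ 2) ^ J * (eps / 2)) by (apply Rmult_lt_0_compat; [apply pow_lt; lra|lra]).
    destruct (pow_lt_1_zero r Hr _ Heta) as [N HN].
    exists N.
    rewrite GF_piter by (auto; lra).
    assert (HP := Pit_small a Ha (eq_sym Hz) (Ha1 1%nat) (S N)). fold r in HP.
    specialize (HN (S N) ltac:(lia)). rewrite Rabs_pos_eq in HN by (apply pow_le; unfold r; assert (0 <= a 1%nat) by apply Ha; lra).
    assert (0 <= piter a N 0%nat) by apply (Inv_le1 _ 0 (Inv_piter a N Ha)).
    assert (0 <= r ^ S N) by (apply pow_le; unfold r; assert (0 <= a 1%nat) by apply Ha; lra).
    lra.
Qed.

Theorem theorem3 (a : nat -> R)
  (ha : forall k, 0 <= a k < 1)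
  (hsum : is_series a 1) :
  (forall n, piter a n 0%nat <= piter a (S n) 0%nat) /\
  (forall n, Rbar_le (sup_pos_coef (piter a (S n))) (sup_pos_coef (piter a n))) /\
  (forall n, is_finite (sup_pos_coef (piter a n))) /\
  is_lim_seq (fun n => sup_pos_coef (piter a n)) (Finite 0).
Proof.
  assert (Ha : Inv a) by (apply Inv_a; auto).
  assert (Ha1 : forall k, a k < 1) by (intros; apply ha).
  assert (Hinfo : forall n, exists s, sup_pos_coef (piter a n) = Finite s /\
            (forall k, piter a n (S k) <= s) /\ 0 <= s /\
            (forall M, (forall k, piter a n (S k) <= M) -> s <= M)).
  { intros n. apply sup_info. intros k. apply Inv_le1, Inv_piter, Ha. }
  assert (P1 := part1 a Ha).
  assert (P2 : forall n, real (sup_pos_coef (piter a (S n))) <= real (sup_pos_coef (piter a n))).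
  { intros n. destruct (Hinfo n) as [s [Es [Hs1 [Hs0 _]]]].
    destruct (Hinfo (S n)) as [s' [Es' [_ [_ Hs']]]].
    rewrite Es, Es'. simpl. apply Hs'. intros k. simpl.
    apply part2_bound; auto.
    - apply Inv_piter, Ha.
    - apply x_lt1; auto.
    - rewrite <- comp_coef_0. apply (P1 n). }
  assert (P0 : forall n, 0 <= real (sup_pos_coef (piter a n))).
  { intros n. destruct (Hinfo n) as [s [Es [_ [Hs0 _]]]]. rewrite Es. exact Hs0. }
  assert (Pfin : forall n, is_finite (sup_pos_coef (piter a n))).
  { intros n. destruct (Hinfo n) as [s [Es _]]. rewrite Es. reflexivity. }
  split; [exact P1|]. split.
  { intros n. rewrite <- (Pfin n), <- (Pfin (S n)). simpl. apply P2. }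
  split; [exact Pfin|].
  apply is_lim_seq_spec. intros eps.
  destruct (exists_small a Ha Ha1 (eps / 2) ltac:(destruct eps; simpl; lra)) as [N HN].
  exists (S N). intros n Hn.
  assert (Hmono : forall m, (S N <= m)%nat -> real (sup_pos_coef (piter a m)) <= real (sup_pos_coef (piter a (S N)))).
  { intros m Hm. induction Hm; [lra|]. eapply Rle_trans; [apply P2|]. exact IHHm. }
  specialize (Hmono n Hn). specialize (P0 n).
  rewrite Rminus_0_r, Rabs_pos_eq by exact P0.
  destruct eps as [e He]. simpl in *. lra.
Qed.
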